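(* In the setting of the context, assume in addition that $V_f$, all $V_{g_i}$ and all $V_{h_j}$ are convex. Let $\bar x\in\mathbb{R}^n$ and $\bar\sigma=(\bar\lambda,\bar\mu,\bar\sigma_f,\bar\sigma_g,\bar\sigma_h)$ satisfy the critical-point conditions (i) $\nabla_x\Xi_1(\bar x,\bar\sigma)=0$; (ii) $\Lambda_f(\bar x)=\nabla V_f^*(\bar\sigma_f)$, $\Lambda_{g_i}(\bar x)=\nabla V_{g_i}^*(\bar\sigma_{g_i})$ for all $i$, $\Lambda_{h_j}(\bar x)=\nabla V_{h_j}^*(\bar\sigma_{h_j})$ for all $j$; (iii) $h(\bar x)=0$, $\bar\lambda\ge0$, $g(\bar x)\le0$, $\bar\lambda^Tg(\bar x)=0$. Suppose $\bar\sigma\in\mathcal S_a^+$ and $\mathcal S_a^+$ is convex. Then $\bar\sigma$ is a global maximizer of $P^d$ on $\mathcal S_a^+$, $\bar x$ is a global minimizer of $f$ on $\mathcal X_a$, and $$f(\bar x)=\min_{x\in\mathcal X_a}f(x)=\max_{\sigma\in\mathcal S_a^+}P^d(\sigma)=P^d(\bar\sigma).$$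
   Context: Problem: minimize $f(x)$ subject to $g_i(x)\le0$ ($i=1,\dots,m$), $h_j(x)=0$ ($j=1,\dots,p$); $g=(g_1,\dots,g_m)$, $h=(h_1,\dots,h_p)$, feasible set $\mathcal X_a=\{x\in\mathbb{R}^n: g(x)\le0,\ h(x)=0\}$. Structural assumption: $f(x)=V_f(\Lambda_f(x))+\tfrac12x^TAx-c^Tx$ with $A$ symmetric, $c\in\mathbb{R}^n$; $g_i(x)=V_{g_i}(\Lambda_{g_i}(x))$; $h_j(x)=V_{h_j}(\Lambda_{h_j}(x))$, where $\Lambda_f:\mathbb{R}^n\to\mathbb{R}^{k_f}$, $\Lambda_{g_i}:\mathbb{R}^n\to\mathbb{R}^{k_i}$, $\Lambda_{h_j}:\mathbb{R}^n\to\mathbb{R}^{l_j}$ are quadratic maps (components are polynomials of degree at most 2). Each $V\in\{V_f,V_{g_i},V_{h_j}\}$ is a ''canonical function'': differentiable on an open set $E\subseteq\mathbb{R}^k$ containing the image of the corresponding $\Lambda$, with $\nabla V:E\to E^*$ a bijection onto an open set $E^*$, and Legendre conjugate $V^*:E^*\to\mathbb{R}$, $V^*(\sigma)=\sigma^T\xi-V(\xi)$, $\xi=(\nabla V)^{-1}(\sigma)$, differentiable with $\nabla V^*=(\nabla V)^{-1}$. Total complementarity function: for $\sigma=(\lambda,\mu,\sigma_f,\sigma_g,\sigma_h)$ with $\lambda\in\mathbb{R}^m$, $\mu\in\mathbb{R}^p$, $\sigma_f\in E_f^*$, $\sigma_{g_i}\in E_{g_i}^*$, $\sigma_{h_j}\in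 E_{h_j}^*$, $$\Xi_1(x,\sigma)=\Lambda_f(x)^T\sigma_f-V_f^*(\sigma_f)+\sum_i\lambda_i\big[\Lambda_{g_i}(x)^T\sigma_{g_i}-V_{g_i}^*(\sigma_{g_i})\big]+\sum_j\mu_j\big[\Lambda_{h_j}(x)^T\sigma_{h_j}-V_{h_j}^*(\sigma_{h_j})\big]+\tfrac12x^TAx-c^Tx.$$ $G(\sigma)=\nabla_x^2\Xi_1(x,\sigma)$ (independent of $x$). $P^d(\sigma)$ is the value of $\Xi_1(\cdot,\sigma)$ at any of its stationary points in $x$ (equivalently $U^\Lambda(\sigma)-V_f^*(\sigma_f)-\sum_i\lambda_iV_{g_i}^*(\sigma_{g_i})-\sum_j\mu_jV_{h_j}^*(\sigma_{h_j})$, where $U^\Lambda(\sigma)$ is the stationary value in $x$ of $\Lambda_f(x)^T\sigma_f+\sum_i\lambda_i\Lambda_{g_i}(x)^T\sigma_{g_i}+\sum_j\mu_j\Lambda_{h_j}(x)^T\sigma_{h_j}+\tfrac12x^TAx-c^Tx$). Dual feasible space $\mathcal S_a$: the set of such $\sigma$ with $\lambda_i\ge0$ for all $i$, $\mu_j\neq0$ for all $j$, and for which $\Xi_1(\cdot,\sigma)$ has a stationary point. Define $\mathcal S_a^+=\{\sigma\in\mathcal S_a: G(\sigma)\succ0,\ \mu_j>0\ \forall j=1,\dots,p\}$. *)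

(* Defs.v *)
From mathcomp Require Import ssreflect ssrfun ssrbool eqtype ssrnat seq fintype bigop.
From Stdlib Require Import Reals ClassicalEpsilon.
Set Implicit Arguments. Unset Strict Implicit. Unset Printing Implicit Defensive.
Local Open Scope R_scope.

Definition Vec (k : nat) := 'I_k -> R.
Definition Mat (k : nat) := 'I_k -> 'I_k -> R.

Definition rsum {k : nat} (F : 'I_k -> R) : R := \big[Rplus/R0]_(i < k) F i.
Definition dot {k : nat} (u v : Vec k) : R := rsum (fun i => u i * v i).
Definition vnorm {k : nat} (u : Vec k) : R := sqrt (dot u u).
Definition vsub {k : nat} (u v : Vec k) : Vec k := fun i => u i - v i.
Definition vzero (k : nat) : Vec k := fun _ => 0.
Arguments vzero k : clear implicits.
Definition vcomb {k : nat} (t : R) (u v : Vec k) : Vec k :=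
  fun i => (1 - t) * u i + t * v i.
Definition mxv {k : nat} (M : Mat k) (x : Vec k) : Vec k :=
  fun r => rsum (fun s => M r s * x s).
Definition quadform {k : nat} (M : Mat k) (x : Vec k) : R := dot x (mxv M x).

Definition mx_symmetric {k : nat} (M : Mat k) : Prop := forall r s, M r s = M s r.
Definition posdef {k : nat} (M : Mat k) : Prop :=
  forall v : Vec k, v <> vzero k -> 0 < quadform M v.

Definition has_grad_at {k : nat} (F : Vec k -> R) (x g : Vec k) : Prop :=
  forall eps, 0 < eps -> exists delta, 0 < delta /\
    forall y, vnorm (vsub y x) < delta ->
      Rabs (F y - F x - dot g (vsub y x)) <= eps * vnorm (vsub y x).

Definition is_hessian {k : nat} (F : Vec k -> R) (H : Mat k) : Prop :=
  exists gr : Vec k -> Vec k,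
    (forall x, has_grad_at F x (gr x)) /\
    (forall x r, has_grad_at (fun y => gr y r) x (fun s => H r s)).

Definition is_open {k : nat} (S : Vec k -> Prop) : Prop :=
  forall x, S x -> exists r, 0 < r /\ forall y, vnorm (vsub y x) < r -> S y.

Definition convex_on {k : nat} (S : Vec k -> Prop) (V : Vec k -> R) : Prop :=
  forall x y t, S x -> S y -> 0 <= t <= 1 ->
    S (vcomb t x y) /\ V (vcomb t x y) <= (1 - t) * V x + t * V y.

Definition is_quadratic {n k : nat} (L : Vec n -> Vec k) : Prop :=
  exists (Q : 'I_k -> Mat n) (b : 'I_k -> Vec n) (c0 : Vec k),
    forall x r, L x r = quadform (Q r) x + dot (b r) x + c0 r.

(* A "component" V(Lambda(x)) of the problem, with canonical-function data:
   V on E, gV = grad V, Vs = V^*, gVs = grad V^* = (grad V)^{-1} on Es. *)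
Record probcomp (n : nat) := Comp {
  cdim : nat;
  cLam : Vec n -> Vec cdim;
  cE : Vec cdim -> Prop;
  cEs : Vec cdim -> Prop;
  cV : Vec cdim -> R;
  cgV : Vec cdim -> Vec cdim;
  cVs : Vec cdim -> R;
  cgVs : Vec cdim -> Vec cdim }.
Arguments cdim {n} p.
Arguments cLam {n} p _ _.
Arguments cE {n} p _.
Arguments cEs {n} p _.
Arguments cV {n} p _.
Arguments cgV {n} p _ _.
Arguments cVs {n} p _.
Arguments cgVs {n} p _ _.

Definition canonical_comp {n : nat} (c : probcomp n) : Prop :=
  is_quadratic (cLam c) /\
  is_open (cE c) /\ is_open (cEs c) /\
  (forall x, cE c (cLam c x)) /\
  (forall xi, cE c xi -> has_grad_at (cV c) xi (cgV c xi)) /\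
  (forall xi, cE c xi -> cEs c (cgV c xi) /\ cgVs c (cgV c xi) = xi) /\
  (forall s, cEs c s -> cE c (cgVs c s) /\ cgV c (cgVs c s) = s) /\
  (forall s, cEs c s -> cVs c s = dot s (cgVs c s) - cV c (cgVs c s)) /\
  (forall s, cEs c s -> has_grad_at (cVs c) s (cgVs c s)).

Section Problem.
Variables (n m p : nat) (F : probcomp n) (Gs : 'I_m -> probcomp n) (Hs : 'I_p -> probcomp n)
          (A : Mat n) (c : Vec n).

Definition fobj (x : Vec n) : R :=
  cV F (cLam F x) + / 2 * quadform A x - dot c x.
Definition gcon (i : 'I_m) (x : Vec n) : R := cV (Gs i) (cLam (Gs i) x).
Definition hcon (j : 'I_p) (x : Vec n) : R := cV (Hs j) (cLam (Hs j) x).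

Definition feasible (x : Vec n) : Prop :=
  (forall i, gcon i x <= 0) /\ (forall j, hcon j x = 0).

Record dual := Dual {
  dlam : 'I_m -> R;
  dmu : 'I_p -> R;
  dsf : Vec (cdim F);
  dsg : forall i : 'I_m, Vec (cdim (Gs i));
  dsh : forall j : 'I_p, Vec (cdim (Hs j)) }.
Arguments dsg d i _ : clear implicits.
Arguments dsh d j _ : clear implicits.

Definition dual_comb (t : R) (s1 s2 : dual) : dual :=
  Dual (fun i => (1 - t) * dlam s1 i + t * dlam s2 i)
       (fun j => (1 - t) * dmu s1 j + t * dmu s2 j)
       (vcomb t (dsf s1) (dsf s2))
       (fun i => vcomb t (dsg s1 i) (dsg s2 i))
       (fun j => vcomb t (dsh s1 j) (dsh s2 j)).

Definition Xi1 (x : Vec n) (s : dual) : R :=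
  dot (cLam F x) (dsf s) - cVs F (dsf s)
  + rsum (fun i => dlam s i * (dot (cLam (Gs i) x) (dsg s i) - cVs (Gs i) (dsg s i)))
  + rsum (fun j => dmu s j * (dot (cLam (Hs j) x) (dsh s j) - cVs (Hs j) (dsh s j)))
  + / 2 * quadform A x - dot c x.

Definition stationary (s : dual) (x : Vec n) : Prop :=
  has_grad_at (fun y => Xi1 y s) x (vzero n).

Definition G_posdef (s : dual) : Prop :=
  exists H : Mat n, is_hessian (fun y => Xi1 y s) H /\ posdef H.

Definition stat_pt (s : dual) : Vec n :=
  epsilon (inhabits (vzero n)) (stationary s).
Definition Pd (s : dual) : R := Xi1 (stat_pt s) s.

Definition in_Sa (s : dual) : Prop :=
  (forall i, 0 <= dlam s i) /\ (forall j, dmu s j <> 0) /\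
  cEs F (dsf s) /\ (forall i, cEs (Gs i) (dsg s i)) /\
  (forall j, cEs (Hs j) (dsh s j)) /\
  (exists x, stationary s x).

Definition in_Sa_plus (s : dual) : Prop :=
  in_Sa s /\ G_posdef s /\ (forall j, 0 < dmu s j).

Definition Sa_plus_convex : Prop :=
  forall s1 s2 t, in_Sa_plus s1 -> in_Sa_plus s2 -> 0 <= t <= 1 ->
    in_Sa_plus (dual_comb t s1 s2).

End Problem.
Arguments dsg {n m p F Gs Hs} d i _.
Arguments dsh {n m p F Gs Hs} d j _.

(* Main.v *)
Require Import Defs.
From mathcomp Require Import ssreflect ssrfun ssrbool eqtype ssrnat seq fintype bigop.
From Stdlib Require Import Reals Lra Psatz FunctionalExtensionality ClassicalEpsilon Classical.
From HB Require Import structures.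
Local Open Scope R_scope.

Lemma Rplus_assoc' : associative Rplus. Proof. move=> x y z; rewrite Rplus_assoc //. Qed.
Lemma Rplus_comm' : commutative Rplus. Proof. move=> x y; exact: Rplus_comm. Qed.
Lemma Rplus_0_l' : left_id R0 Rplus. Proof. move=> x; exact: Rplus_0_l. Qed.
HB.instance Definition _ := Monoid.isComLaw.Build R R0 Rplus Rplus_assoc' Rplus_comm' Rplus_0_l'.

Lemma rsum_ext k (f g : 'I_k -> R) : (forall i, f i = g i) -> rsum f = rsum g.
Proof. move=> H; rewrite /rsum; apply: eq_bigr => i _; exact: H. Qed.

Lemma rsum_plus k (f g : 'I_k -> R) : rsum (fun i => f i + g i) = rsum f + rsum g.
Proof.
elim: k f g => [|k IH] f g; rewrite /rsum ?big_ord0; first lra.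
rewrite !big_ord_recr /=. rewrite -/(rsum _) -/(rsum _) -/(rsum _).
rewrite (IH (fun i => f (widen_ord (leqnSn k) i)) (fun i => g (widen_ord (leqnSn k) i))). lra.
Qed.

Lemma rsum_scal k (a : R) (f : 'I_k -> R) : rsum (fun i => a * f i) = a * rsum f.
Proof.
elim: k f => [|k IH] f; rewrite /rsum ?big_ord0; first lra.
rewrite !big_ord_recr /=. rewrite -/(rsum _) -/(rsum _).
rewrite (IH (fun i => f (widen_ord (leqnSn k) i))). lra.
Qed.

Lemma rsum_le k (f g : 'I_k -> R) : (forall i, f i <= g i) -> rsum f <= rsum g.
Proof.
elim: k f g => [|k IH] f g H; rewrite /rsum ?big_ord0; first lra.
rewrite !big_ord_recr /=. rewrite -/(rsum _) -/(rsum _).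
have := IH (fun i => f (widen_ord (leqnSn k) i)) (fun i => g (widen_ord (leqnSn k) i)) (fun i => H _).
have := H ord_max. lra.
Qed.

Lemma rsum_zero k : rsum (fun _ : 'I_k => 0) = 0.
Proof.
elim: k => [|k IH]; rewrite /rsum ?big_ord0 //. rewrite big_ord_recr /= -/(rsum _) IH; lra.
Qed.

Lemma rsum_deriv k (f : 'I_k -> R -> R) (f' : 'I_k -> R) t :
  (forall r, derivable_pt_lim (f r) t (f' r)) ->
  derivable_pt_lim (fun u => rsum (fun r => f r u)) t (rsum f').
Proof.
elim: k f f' => [|k IH] f f' H.
  have -> : (fun u => rsum (fun r : 'I_0 => f r u)) = fct_cte 0.
    apply: functional_extensionality => u; by rewrite /rsum big_ord0.
  rewrite /rsum big_ord0; exact: derivable_pt_lim_const.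
have -> : (fun u => rsum (fun r => f r u)) =
   plus_fct (fun u => rsum (fun r => f (widen_ord (leqnSn k) r) u)) (f ord_max).
  apply: functional_extensionality => u; by rewrite /rsum big_ord_recr.
rewrite /rsum big_ord_recr /= -/(rsum _).
apply: derivable_pt_lim_plus; last exact: H.
exact: (IH (fun r => f (widen_ord (leqnSn k) r)) (fun r => f' (widen_ord (leqnSn k) r))).
Qed.

Lemma dot_comm k (u v : Vec k) : dot u v = dot v u.
Proof. apply: rsum_ext => i; lra. Qed.

Lemma dot_scal_r k (g d : Vec k) h : dot g (fun i => h * d i) = h * dot g d.
Proof. rewrite /dot -rsum_scal; apply: rsum_ext => i; lra. Qed.

Lemma dot_sub_r k (s a b : Vec k) : dot s (vsub a b) = dot s a - dot s b.
Proof.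
rewrite /dot /vsub.
have -> : rsum (fun i => s i * (a i - b i)) = rsum (fun i => s i * a i + (-1) * (s i * b i)).
  apply: rsum_ext => i; lra.
rewrite rsum_plus rsum_scal; lra.
Qed.

Lemma dot_ge0 k (d : Vec k) : 0 <= dot d d.
Proof. rewrite -(rsum_zero k); apply: rsum_le => i; nra. Qed.

Lemma dot_zero_l k (d : Vec k) : dot (vzero k) d = 0.
Proof. rewrite -(rsum_zero k); apply: rsum_ext => i; rewrite /vzero; lra. Qed.

Lemma quadform_zero k (H : Mat k) : quadform H (vzero k) = 0.
Proof. exact: dot_zero_l. Qed.

Lemma vnorm_ge0 k (d : Vec k) : 0 <= vnorm d.
Proof. exact: sqrt_pos. Qed.

Lemma vnorm_scal k (d : Vec k) h : vnorm (fun i => h * d i) = Rabs h * vnorm d.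
Proof.
rewrite /vnorm.
have -> : dot (fun i => h * d i) (fun i => h * d i) = (h * h) * dot d d.
  rewrite dot_scal_r dot_comm dot_scal_r; lra.
rewrite sqrt_mult; [|nra|exact: dot_ge0].
by rewrite -[h * h]/(Rsqr h) sqrt_Rsqr_abs.
Qed.

Lemma line_deriv k (phi : Vec k -> R) (x0 d : Vec k) t g :
  has_grad_at phi (fun i => x0 i + t * d i) g ->
  derivable_pt_lim (fun u => phi (fun i => x0 i + u * d i)) t (dot g d).
Proof.
move=> Hg eps Heps.
set N := vnorm d.
have HN : 0 <= N by exact: vnorm_ge0.
have He' : 0 < eps / (2 * (N + 1)) by apply: Rdiv_lt_0_compat; lra.
case: (Hg _ He') => dl [Hdl Hy].
have Hpos : 0 < dl / (N + 1) by apply: Rdiv_lt_0_compat; lra.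
exists (mkposreal _ Hpos) => h hn0 hlt /=.
simpl in hlt.
have Hs : vsub (fun i => x0 i + (t + h) * d i) (fun i => x0 i + t * d i) = (fun i => h * d i).
  apply: functional_extensionality => i; rewrite /vsub; ring.
have := Hy (fun i => x0 i + (t + h) * d i).
rewrite Hs vnorm_scal dot_scal_r -/N.
have Hah : 0 < Rabs h by apply: Rabs_pos_lt.
have Hlt1 : Rabs h * N < dl.
  have : Rabs h * (N + 1) < dl.
    apply (Rmult_lt_reg_r (/ (N+1))). apply: Rinv_0_lt_compat; lra.
    rewrite Rmult_assoc Rinv_r; [|lra]. rewrite Rmult_1_r. exact hlt.
  nra.
move=> /(_ Hlt1) Hb.
set D := phi _ - phi _ in Hb *.
have -> : D / h - dot g d = (D - h * dot g d) / h by field.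
rewrite /Rdiv Rabs_mult Rabs_inv.
apply (Rmult_lt_reg_r (Rabs h)) => //.
rewrite /Rdiv Rmult_assoc Rinv_l; [|lra]. rewrite Rmult_1_r.
apply: (Rle_lt_trans _ _ _ Hb).
have : eps / (2 * (N + 1)) * N < eps.
  apply (Rmult_lt_reg_r (2 * (N+1))). lra.
  have -> : eps / (2 * (N + 1)) * N * (2 * (N + 1)) = eps * N by field; lra.
  nra.
nra.
Qed.

Lemma grad_ineq k (E : Vec k -> Prop) V x0 x g :
  convex_on E V -> E x0 -> E x -> has_grad_at V x0 g ->
  V x0 + dot g (vsub x x0) <= V x.
Proof.
move=> Hc H0 H1 Hg.
set d := vsub x x0.
set psi := fun u => V (fun i => x0 i + u * d i).
have Hl : forall u, vcomb u x0 x = (fun i => x0 i + u * d i).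
  move=> u; apply: functional_extensionality => i; rewrite /vcomb /d /vsub; ring.
have Hp0 : psi 0 = V x0.
  rewrite /psi; f_equal; apply: functional_extensionality => i; ring.
have Hp1 : psi 1 = V x.
  rewrite /psi; f_equal; apply: functional_extensionality => i; rewrite /d /vsub; ring.
have Hconv : forall u, 0 <= u <= 1 -> psi u <= (1 - u) * psi 0 + u * psi 1.
  move=> u Hu; rewrite Hp0 Hp1 /psi -Hl; exact: (proj2 (Hc _ _ _ H0 H1 Hu)).
have Hd : derivable_pt_lim psi 0 (dot g d).
  apply: line_deriv.
  have -> : (fun i => x0 i + 0 * d i) = x0 by apply: functional_extensionality => i; ring.
  exact Hg.
apply: Rnot_lt_le => Hlt.
set l := dot g d in Hd Hlt.
have Heps : 0 < l - (psi 1 - psi 0) by rewrite Hp0 Hp1; lra.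
case: (Hd _ Heps) => del Hdel.
set h := Rmin (del / 2) (1 / 2).
have Hh : 0 < h by apply: Rmin_pos; have := cond_pos del; lra.
have Hh1 : h <= 1 / 2 by apply: Rmin_r.
have Hh2 : h <= del / 2 by apply: Rmin_l.
have Hdp := cond_pos del.
have := Hdel h ltac:(lra) ltac:(rewrite Rabs_right; lra).
rewrite Rplus_0_l.
have Hc' := Hconv h ltac:(lra).
set q := (psi h - psi 0) / h.
have Hq : psi h - psi 0 = q * h by rewrite /q; field; lra.
have : q * h <= (psi 1 - psi 0) * h by nra.
move=> Hqh.
have Hq2 : q <= psi 1 - psi 0 by apply: (Rmult_le_reg_r h) => //.
move=> Habs.
have := Rle_abs (-(q - l)). rewrite Rabs_Ropp. lra.
Qed.

Lemma global_min k (phi : Vec k -> R) (H : Mat k) x0 :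
  is_hessian phi H -> posdef H -> has_grad_at phi x0 (vzero k) ->
  forall y, phi x0 <= phi y.
Proof.
move=> [gr [Hgr Hgr2]] Hpd Hst y.
set d := vsub y x0.
set ln := fun u => (fun i => x0 i + u * d i).
set psi := fun u => phi (ln u).
set chi := fun u => dot (gr (ln u)) d.
have dpsi : forall t, derivable_pt_lim psi t (chi t).
  move=> t; exact: line_deriv.
have Hq : 0 <= quadform H d.
  case: (classic (d = vzero k)) => [->|Hne]; first by rewrite quadform_zero; lra.
  by apply: Rlt_le; apply: Hpd.
have dchi : forall t, derivable_pt_lim chi t (quadform H d).
  move=> t.
  have -> : chi = (fun u => rsum (fun r => (fun r u => gr (ln u) r * d r) r u)) by [].
  have -> : quadform H d = rsum (fun r => dot (fun s => H r s) d * d r).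
    apply: rsum_ext => r; rewrite /mxv /dot; lra.
  apply: rsum_deriv => r.
  have Hc := line_deriv _ (fun z => gr z r) x0 d t _ (Hgr2 _ r).
  have := @derivable_pt_lim_scal (fun u => gr (ln u) r) (d r) t _ Hc.
  have -> : mult_real_fct (d r) (fun u => gr (ln u) r) = (fun u => gr (ln u) r * d r).
    apply: functional_extensionality => u; rewrite /mult_real_fct; lra.
  by rewrite Rmult_comm.
pose prc : derivable chi := fun t => exist _ (quadform H d) (dchi t).
pose prp : derivable psi := fun t => exist _ (chi t) (dpsi t).
have Hinc : increasing chi.
  apply: (nonneg_derivative_1 chi prc) => t //.
have Hl0 : ln 0 = x0 by apply: functional_extensionality => i; rewrite /ln; ring.
have Hl1 : ln 1 = y by apply: functional_extensionality => i; rewrite /ln /d /vsub; ring.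
have Hchi0 : chi 0 = 0.
  have Hd0 : derivable_pt_lim psi 0 (dot (vzero k) d).
    apply: line_deriv; rewrite -/(ln 0) Hl0; exact Hst.
  rewrite dot_zero_l in Hd0.
  exact: (uniqueness_limite psi 0 _ _ (dpsi 0) Hd0).
case: (MVT_cor1 psi 0 1 prp ltac:(lra)) => cc [Heq Hcc].
have : 0 <= chi cc by rewrite -Hchi0; apply: Hinc; lra.
simpl in Heq.
move: Heq; rewrite /psi Hl0 Hl1. nra.
Qed.

Lemma FY n (c : probcomp n) : canonical_comp c -> convex_on (cE c) (cV c) ->
  forall s xi, cEs c s -> cE c xi -> dot xi s - cVs c s <= cV c xi.
Proof.
move=> [_ [_ [_ [_ [Hgr [_ [Hb2 [Hleg _]]]]]]]] Hcv s xi Hs Hxi.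
case: (Hb2 s Hs) => HE0 Hg0.
have Hg := Hgr _ HE0. rewrite Hg0 in Hg.
have := grad_ineq _ _ _ _ _ _ Hcv HE0 Hxi Hg.
rewrite dot_sub_r (Hleg s Hs) (dot_comm _ xi s). lra.
Qed.

Lemma FY_eq n (c : probcomp n) : canonical_comp c ->
  forall s, cEs c s -> dot (cgVs c s) s - cVs c s = cV c (cgVs c s).
Proof.
move=> [_ [_ [_ [_ [_ [_ [_ [Hleg _]]]]]]]] s Hs.
rewrite (Hleg s Hs) dot_comm; lra.
Qed.

Theorem theorem2 (n m p : nat) (F : probcomp n) (Gs : 'I_m -> probcomp n)
    (Hs : 'I_p -> probcomp n) (A : Mat n) (c : Vec n)
    (hF : canonical_comp F) (hG : forall i, canonical_comp (Gs i))
    (hH : forall j, canonical_comp (Hs j))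
    (hA : mx_symmetric A)
    (cvF : convex_on (cE F) (cV F))
    (cvG : forall i, convex_on (cE (Gs i)) (cV (Gs i)))
    (cvH : forall j, convex_on (cE (Hs j)) (cV (Hs j)))
    (xb : Vec n) (sb : dual F Gs Hs)
    (h_i : stationary A c sb xb)
    (h_iif : cLam F xb = cgVs F (dsf sb))
    (h_iig : forall i, cLam (Gs i) xb = cgVs (Gs i) (dsg sb i))
    (h_iih : forall j, cLam (Hs j) xb = cgVs (Hs j) (dsh sb j))
    (h_iii_h : forall j, hcon Hs j xb = 0)
    (h_iii_lam : forall i, 0 <= dlam sb i)
    (h_iii_g : forall i, gcon Gs i xb <= 0)
    (h_iii_comp : rsum (fun i => dlam sb i * gcon Gs i xb) = 0)
    (hsb : in_Sa_plus A c sb)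
    (hconv : Sa_plus_convex F Gs Hs A c) :
  (forall s : dual F Gs Hs, in_Sa_plus A c s -> Pd A c s <= Pd A c sb) /\
  feasible Gs Hs xb /\
  (forall x, feasible Gs Hs x -> fobj F A c xb <= fobj F A c x) /\
  fobj F A c xb = Pd A c sb.
Proof.
have LamE : forall (q : probcomp n), canonical_comp q -> forall x, cE q (cLam q x).
  by move=> q [_ [_ [_ [H _]]]].
have Hbound : forall (s : dual F Gs Hs) x, in_Sa_plus A c s -> feasible Gs Hs x ->
    Xi1 A c x s <= fobj F A c x.
  move=> s x [[Hl [_ [HsF [HsG [HsH _]]]]] [_ Hmu]] [Hgx Hhx].
  rewrite /Xi1 /fobj.
  have t1 := FY _ _ hF cvF _ _ HsF (LamE _ hF x).
  have t2 : rsum (fun i => dlam s i * (dot (cLam (Gs i) x) (dsg s i) - cVs (Gs i) (dsg s i))) <= 0.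
    rewrite -(rsum_zero m); apply: rsum_le => i.
    have := FY _ _ (hG i) (cvG i) _ _ (HsG i) (LamE _ (hG i) x).
    have := Hgx i; rewrite /gcon. have := Hl i. nra.
  have t3 : rsum (fun j => dmu s j * (dot (cLam (Hs j) x) (dsh s j) - cVs (Hs j) (dsh s j))) <= 0.
    rewrite -(rsum_zero p); apply: rsum_le => j.
    have := FY _ _ (hH j) (cvH j) _ _ (HsH j) (LamE _ (hH j) x).
    have := Hhx j; rewrite /hcon. have := Hmu j. nra.
  lra.
have Hmin : forall (s : dual F Gs Hs), in_Sa_plus A c s -> forall y, Pd A c s <= Xi1 A c y s.
  move=> s [[_ [_ [_ [_ [_ Hex]]]]] [[H [Hh Hp]] _]] y.
  have Hst : stationary A c s (stat_pt A c s).
    rewrite /stat_pt; exact: epsilon_spec.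
  exact: (global_min _ _ H _ Hh Hp Hst).
have Hfeas : feasible Gs Hs xb by split.
have Heq : Xi1 A c xb sb = fobj F A c xb.
  case: hsb => [[_ [_ [HsF [HsG [HsH _]]]]] _].
  rewrite /Xi1 /fobj.
  have e1 : dot (cLam F xb) (dsf sb) - cVs F (dsf sb) = cV F (cLam F xb).
    rewrite h_iif; exact: FY_eq.
  have e2 : rsum (fun i => dlam sb i * (dot (cLam (Gs i) xb) (dsg sb i) - cVs (Gs i) (dsg sb i))) = 0.
    rewrite -h_iii_comp; apply: rsum_ext => i; rewrite /gcon h_iig FY_eq //.
  have e3 : rsum (fun j => dmu sb j * (dot (cLam (Hs j) xb) (dsh sb j) - cVs (Hs j) (dsh sb j))) = 0.
    rewrite -(rsum_zero p); apply: rsum_ext => j.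
    have := h_iii_h j; rewrite /hcon h_iih FY_eq // => ->; ring.
  lra.
have HPd : Pd A c sb = fobj F A c xb.
  apply: Rle_antisym; first by rewrite -Heq; exact: Hmin.
  rewrite -Heq.
  case: hsb => [[_ [_ [_ [_ [_ Hex]]]]] [[H [Hh Hp]] _]].
  have Hst : stationary A c sb (stat_pt A c sb) by rewrite /stat_pt; exact: epsilon_spec.
  exact: (global_min _ _ H _ Hh Hp h_i).
split; last split; last split.
- move=> s Hs'. rewrite HPd. apply: Rle_trans (Hmin _ Hs' xb) _. exact: Hbound.
- exact Hfeas.
- move=> x Hx. rewrite -HPd. apply: Rle_trans (Hmin _ hsb x) _. exact: Hbound.
- by rewrite HPd.
Qed.
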